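(* Let $p$ be a prime and $b$ an integer with $0<b\le b^{-1}<p$. Write $p=bq+r$ with $0\le r<b$ and $p=b^{-1}s+t$ with $0\le t<b^{-1}$ (division algorithm). Then $\mathrm{inv}_{1,b}$ has 2 slopes if and only if $r=s$ and $q=t$.
   Context: Let $S=\mathbb{C}[x_1,x_2]$, $\zeta=e^{2\pi i/p}$, $G=\mathbb{Z}/p\mathbb{Z}=\langle\zeta\rangle$ acting on $S$ by $x_1\mapsto\zeta x_1$, $x_2\mapsto\zeta^bx_2$, with invariant ring $S^G_{1,b}$ (spanned by monomials $x_1^cx_2^d$ with $c+bd\equiv0\pmod p$). $\mathrm{inv}_{1,b}$ denotes the minimal set of monomial generators of $S^G_{1,b}$ as a $\mathbb{C}$-algebra: the nonconstant invariant monomials that are not a product of two nonconstant invariant monomials. $b^{-1}$ is the unique integer $0<b^{-1}<p$ with $bb^{-1}\equiv1\pmod p$. Writing $\mathrm{inv}_{1,b}=\{x_1^{c_0}x_2^{d_0},\dots,x_1^{c_n}x_2^{d_n}\}$ in lexicographic order with $x_1>x_2$, set $\mathrm{sl}_{1,b}=\left\{\frac{d_{i+1}-d_i}{c_{i+1}-c_i}\;\middle|\;0\le i\le n-1\right\}$, the set of slopes between consecutive exponent vectors; $\mathrm{inv}_{1,b}$ is said to have 2 slopes if $|\mathrm{sl}_{1,b}|=2$. *)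

(* Defs.v *)
From mathcomp Require Import all_boot all_order all_algebra.
Set Implicit Arguments. Unset Strict Implicit. Unset Printing Implicit Defensive.
Import Order.TTheory GRing.Theory Num.Theory.

(* Exponent vector (c, d) stands for the monomial x1^c x2^d. *)

(* x1^c x2^d is invariant under x1 -> zeta x1, x2 -> zeta^b x2. *)
Definition is_invariant (p b : nat) (m : nat * nat) : bool :=
  (m.1 + b * m.2) %% p == 0.

Definition nonconst (m : nat * nat) : bool := m != (0, 0).

(* x1^c x2^d is a product of two nonconstant invariant monomials:
   any factorisation x1^c1 x2^d1 * x1^(c-c1) x2^(d-d1) has c1 <= c, d1 <= d. *)
Definition decomposable (p b : nat) (m : nat * nat) : bool :=
  [exists c1 : 'I_(m.1).+1, exists d1 : 'I_(m.2).+1,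
     [&& is_invariant p b (val c1, val d1),
         is_invariant p b (m.1 - c1, m.2 - d1),
         nonconst (val c1, val d1) & nonconst (m.1 - c1, m.2 - d1)]].

Definition is_min_gen (p b : nat) (m : nat * nat) : bool :=
  [&& is_invariant p b m, nonconst m & ~~ decomposable p b m].

Definition lexle (m n : nat * nat) : bool :=
  (m.1 < n.1) || ((m.1 == n.1) && (m.2 <= n.2)).

(* inv_{1,b} listed in lexicographic order.  Every minimal generator has
   both exponents <= p (x1^p and x2^p are invariant), so it suffices to
   search the box [0,p] x [0,p]. *)
Definition inv_list (p b : nat) : seq (nat * nat) :=
  sort lexle [seq m <- [seq (c, d) | c <- iota 0 p.+1, d <- iota 0 p.+1]
             | is_min_gen p b m].

Definition slope (m n : nat * nat) : rat :=
  ((n.2%:Z - m.2%:Z)%R%:~R / (n.1%:Z - m.1%:Z)%R%:~R)%R.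

Definition slopes (s : seq (nat * nat)) : seq rat :=
  [seq slope (nth (0,0) s i) (nth (0,0) s i.+1) | i <- iota 0 (size s).-1].

Definition has_two_slopes (p b : nat) : bool :=
  size (undup (slopes (inv_list p b))) == 2.

(* Main.v *)
Require Import Defs.
From mathcomp Require Import all_boot all_order all_algebra.
From mathcomp Require Import zify ring lra.
Set Implicit Arguments. Unset Strict Implicit. Unset Printing Implicit Defensive.
Import Order.TTheory GRing.Theory Num.Theory.


Lemma decompP p b m : reflect (exists c1 d1, [/\ c1 <= m.1, d1 <= m.2,
   p %| c1 + b * d1, p %| (m.1-c1) + b * (m.2-d1) &
   (c1,d1) != (0,0) /\ (m.1-c1, m.2-d1) != (0,0)]) (decomposable p b m).
Proof.
apply: (iffP existsP).
  case=> c1 /existsP [d1 /and4P[h1 h2 h3 h4]].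
  exists (val c1), (val d1); split=> //; rewrite -ltnS; exact: ltn_ord.
case=> c1 [d1 [h1 h2 h3 h4 [h5 h6]]].
have hc : c1 < m.1.+1 by rewrite ltnS.
have hd : d1 < m.2.+1 by rewrite ltnS.
exists (Ordinal hc); apply/existsP; exists (Ordinal hd); apply/and4P; split=> //.
Qed.

Lemma mem_inv p b (m : nat * nat) : (m \in inv_list p b) = [&& is_min_gen p b m, m.1 <= p & m.2 <= p].
Proof.
rewrite /inv_list mem_sort mem_filter; case: m => c d.
congr andb.
apply/allpairsPdep/andP.
  case=> [x [y]] [hx hy [-> ->]]; move: hx hy.
  rewrite (mem_iota 0 p.+1 x) (mem_iota 0 p.+1 y) /=; lia.
case=> /= h1 h2; exists c; exists d; split; [rewrite (mem_iota 0 p.+1 c); lia | rewrite (mem_iota 0 p.+1 d); lia | by []].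
Qed.

Lemma nc0 c d : ((c,d) != (0,0)) = (0 < c + d).
Proof. by rewrite xpair_eqE; case: c; case: d. Qed.

Section S.
Variables p b binv : nat.
Hypothesis pp : prime p.
Hypothesis hbinv : 0 < binv < p.
Hypothesis hbb : b * binv = 1 %[mod p].
Hypothesis hb : 0 < b.
Hypothesis hbi : b <= binv.

Lemma p_gt1 : 1 < p. Proof. exact: prime_gt1. Qed.

Lemma kdef : exists k, b * binv = 1 + k * p.
Proof.
exists (b * binv %/ p).
rewrite {1}(divn_eq (b*binv) p) hbb modn_small ?p_gt1 //; lia.
Qed.

Lemma inv_equiv c d : (p %| c + b * d) = (p %| binv * c + d).
Proof.
have [k hk] := kdef.
apply/idP/idP => h.
  have : p %| binv * (c + b * d) by rewrite dvdn_mull.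
  have -> : binv * (c + b * d) = (binv * c + d) + (k*d) * p.
    rewrite mulnDr mulnA (mulnC binv b) hk; ring.
  by rewrite dvdn_addl // dvdn_mull.
have : p %| b * (binv * c + d) by rewrite dvdn_mull.
have -> : b * (binv * c + d) = (c + b * d) + (k*c) * p.
  rewrite mulnDr mulnA hk; ring.
by rewrite dvdn_addl // dvdn_mull.
Qed.

Lemma inv_is c d : is_invariant p b (c,d) = (p %| c + b * d).
Proof. by []. Qed.

Lemma dvd_small x : p %| x -> 0 < x -> x < 2 * p -> x = p.
Proof.
move=> /dvdnP [k ->]; case: k => [|[|k]] //=; lia.
Qed.

Lemma mingen_lin m : m.1 + b * m.2 = p -> is_min_gen p b m.
Proof.
have p1 := p_gt1.
case: m => c d /= h; apply/and3P; split.
- by rewrite inv_is h.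
- rewrite /nonconst nc0; case: c h => [|c]; case: d => [|d] //=; lia.
apply/decompP => /= [[c1 [d1 [h1 h2 h3 h4 [h5 h6]]]]].
rewrite nc0 in h5; rewrite nc0 in h6.
have f1 : d1 <= b * d1 by rewrite leq_pmull.
have f2 : d - d1 <= b * (d - d1) by rewrite leq_pmull.
have f3 : b * (d - d1) = b * d - b * d1 by rewrite mulnBr.
have f4 : b * d1 <= b * d by rewrite leq_mul2l h2 orbT.
have e1 : c1 + b * d1 = p by apply: dvd_small h3 _ _; lia.
have e2 : (c - c1) + b * (d - d1) = p by apply: dvd_small h4 _ _; lia.
lia.
Qed.

Lemma mingen_lin' m : binv * m.1 + m.2 = p -> is_min_gen p b m.
Proof.
have p1 := p_gt1.
have bi0 : 0 < binv by case/andP: hbinv.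
case: m => c d /= h; apply/and3P; split.
- by rewrite inv_is inv_equiv h.
- rewrite /nonconst nc0; case: c h => [|c]; case: d => [|d] //=; lia.
apply/decompP => /= [[c1 [d1 [h1 h2 h3 h4 [h5 h6]]]]].
rewrite nc0 in h5; rewrite nc0 in h6.
rewrite inv_equiv in h3; rewrite inv_equiv in h4.
have f1 : c1 <= binv * c1 by rewrite leq_pmull.
have f2 : c - c1 <= binv * (c - c1) by rewrite leq_pmull.
have f3 : binv * (c - c1) = binv * c - binv * c1 by rewrite mulnBr.
have f4 : binv * c1 <= binv * c by rewrite leq_mul2l h1 orbT.
have e1 : binv * c1 + d1 = p by apply: dvd_small h3 _ _; lia.
have e2 : binv * (c - c1) + (d - d1) = p by apply: dvd_small h4 _ _; lia.
lia.
Qed.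
End S.


Lemma slopeE (x y u v : nat * nat) : x.1 < y.1 -> u.1 < v.1 ->
  (slope x y = slope u v) <->
  (((y.2%:Z - x.2%:Z) * (v.1%:Z - u.1%:Z))%R = ((v.2%:Z - u.2%:Z) * (y.1%:Z - x.1%:Z))%R).
Proof.
move=> hxy huv.
have n1 : ((y.1%:Z - x.1%:Z)%:~R : rat) != 0%R by rewrite intr_eq0 subr_eq0 eqz_nat; lia.
have n2 : ((v.1%:Z - u.1%:Z)%:~R : rat) != 0%R by rewrite intr_eq0 subr_eq0 eqz_nat; lia.
rewrite /slope; split.
  by move/eqP; rewrite eqr_div // -!intrM eqr_int => /eqP.
by move=> h; apply/eqP; rewrite eqr_div // -!intrM h.
Qed.

Section L.
Variables p b : nat.
Local Notation l := (inv_list p b).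

Lemma gen_props (m : nat * nat) : m \in l ->
  [/\ p %| m.1 + b * m.2, 0 < m.1 + m.2, m.1 <= p, m.2 <= p & ~~ decomposable p b m].
Proof.
rewrite mem_inv => /and3P [/and3P [h1 h2 h3] h4 h5].
by split=> //; case: m h2 {h1 h3 h4 h5} => c d; rewrite /nonconst nc0.
Qed.

Lemma antichain (x y : nat * nat) : x \in l -> y \in l -> x.1 <= y.1 -> x.2 <= y.2 -> x = y.
Proof.
move=> /gen_props [hx1 hx2 _ _ _] /gen_props [hy1 hy2 _ _ hy5] le1 le2.
case: x y hx1 hx2 le1 le2 {hy5} hy1 hy2 (hy5) => c d [c' d'] /= hx1 hx2 le1 le2 hy1 hy2 hy5.
apply/eqP; rewrite xpair_eqE; apply/negPn/negP => hne.
move/negP: hy5; apply; apply/decompP; exists c; exists d; split=> //=.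
- have e : c' - c + b * (d' - d) + (c + b * d) = c' + b * d'.
    rewrite mulnBr; have : b * d <= b * d' by rewrite leq_mul2l le2 orbT.
    lia.
  by rewrite -(dvdn_addr _ hx1) addnC; move: hy1; rewrite -e addnC.
- split; first by rewrite nc0.
  rewrite nc0; move: hne; rewrite negb_and; case/orP => /eqP; lia.
Qed.

Lemma samec (x y : nat * nat) : x \in l -> y \in l -> x.1 = y.1 -> x = y.
Proof.
move=> hx hy e.
case: (leqP x.2 y.2) => h.
  by apply: antichain; rewrite ?e.
by apply/esym/antichain; rewrite ?e //; apply: ltnW.
Qed.

Lemma anti2 (x y : nat * nat) : x \in l -> y \in l -> x.1 < y.1 -> y.2 < x.2.
Proof.
move=> hx hy h; rewrite ltnNge; apply/negP => h2.
have e := antichain hx hy (ltnW h) h2; by move: h; rewrite e ltnn.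
Qed.

Lemma uniq_l : uniq l.
Proof.
rewrite sort_uniq filter_uniq // allpairs_uniq ?iota_uniq //.
by move=> [a1 a2] [b1 b2] _ _ /= [-> ->].
Qed.

Lemma lexle_trans : transitive lexle.
Proof.
move=> y x z; rewrite /lexle => /orP [h1|/andP [/eqP e1 h1]] /orP [h2|/andP [/eqP e2 h2]];
  apply/orP; first [left; lia | right; apply/andP; split; [apply/eqP; lia | lia]].
Qed.

Lemma lexle_total : total lexle.
Proof.
move=> x y; rewrite /lexle; case: (ltngtP x.1 y.1) => //= e.
by rewrite ?eqxx /= ?leq_total //; rewrite e eqxx /= leq_total.
Qed.

Lemma nth_mono i j : i < j -> j < size l -> (nth (0,0) l i).1 < (nth (0,0) l j).1.
Proof.
move=> hij hj.
have hi : i < size l by lia.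
have pw : pairwise lexle l by rewrite -sorted_pairwise ?sort_sorted //;
  [exact: lexle_total | exact: lexle_trans].
have := (pairwiseP (0,0) pw) i j hi hj hij.
have hne : nth (0,0) l i != nth (0,0) l j by rewrite nth_uniq ?uniq_l //; lia.
rewrite /lexle => /orP [//|/andP [/eqP e _]].
by move: hne; rewrite (samec (mem_nth _ hi) (mem_nth _ hj) e) eqxx.
Qed.

Lemma consec (x y : nat * nat) : x \in l -> y \in l -> x.1 < y.1 ->
  (forall z, z \in l -> ~~ (x.1 < z.1 < y.1)) -> slope x y \in slopes l.
Proof.
move=> hx hy hxy hz.
set i := index x l; set j := index y l.
have hi : i < size l by rewrite index_mem.
have hj : j < size l by rewrite index_mem.
have ex : nth (0,0) l i = x by rewrite nth_index.
have ey : nth (0,0) l j = y by rewrite nth_index.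
have ij : i < j.
  case: (ltngtP i j) => // h.
    by have := nth_mono h hi; rewrite ex ey => h2; move: hxy; rewrite ltnNge (ltnW h2).
  by move: hxy; rewrite -ex -ey h; lia.
have ej : j = i.+1.
  case: (ltngtP j i.+1) => // h; first lia.
  have h1 := nth_mono (ltnSn i) (ltn_trans h hj).
  have h2 := nth_mono h hj.
  by have := hz _ (mem_nth (0,0) (ltn_trans h hj)); rewrite -ex -ey h1 h2.
apply/mapP; exists i; first by rewrite mem_iota; lia.
by rewrite ex -ej ey.
Qed.

Lemma slopes_inv sl : sl \in slopes l -> exists x y : nat * nat, [/\ x \in l, y \in l, x.1 < y.1,
  (forall z, z \in l -> ~~ (x.1 < z.1 < y.1)) & sl = slope x y].
Proof.
case/mapP => i; rewrite mem_iota => /andP [_ hi] ->.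
have hi1 : i < size l by lia.
have hi2 : i.+1 < size l by lia.
exists (nth (0,0) l i), (nth (0,0) l i.+1); split; rewrite ?mem_nth //.
  exact: nth_mono.
move=> z /(nthP (0,0)) [k hk <-].
apply/negP => /andP [h1 h2].
case: (ltngtP k i) => h.
- by have := nth_mono h hi1; rewrite ltnNge (ltnW h1).
- case: (ltngtP k i.+1) => h'.
  + lia.
  + by have := nth_mono h' hk; rewrite ltnNge (ltnW h2).
  + by move: h2; rewrite h' ltnn.
- by move: h1; rewrite h ltnn.
Qed.
End L.


Lemma two_elems (T : eqType) (u : seq T) (A B z : T) :
  size u = 2 -> A \in u -> B \in u -> A != B -> z \in u -> z = A \/ z = B.
Proof.
case: u => [|u1 [|u2 [|u3 u]]] //= _.
rewrite !inE => /orP [/eqP->|/eqP->] /orP [/eqP->|/eqP->]; rewrite ?eqxx //= => _;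
  by case/orP => /eqP ->; auto.
Qed.

Lemma size_two (T : eqType) (u : seq T) (A B : T) :
  uniq u -> A \in u -> B \in u -> A != B -> (forall z, z \in u -> z = A \/ z = B) ->
  size u = 2.
Proof.
move=> uu hA hB hAB hz.
have hp : perm_eq u [:: A; B].
  apply: uniq_perm => //; first by rewrite /= inE hAB.
  move=> z; rewrite !inE; apply/idP/idP.
    by move/hz => [->|->]; rewrite eqxx ?orbT.
  by case/orP => /eqP ->.
by rewrite (perm_size hp).
Qed.

Section M.
Variables p b binv K : nat.
Hypothesis p1 : 1 < p.
Hypothesis hbinv : 0 < binv < p.
Hypothesis hK : b * binv = 1 + K * p.
Hypothesis hb : 0 < b.
Hypothesis hbi : b <= binv.
Local Notation l := (inv_list p b).

Lemma inv_equiv' c d : (p %| c + b * d) = (p %| binv * c + d).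
Proof.
apply/idP/idP => h.
  have : p %| binv * (c + b * d) by rewrite dvdn_mull.
  have -> : binv * (c + b * d) = (binv * c + d) + (K * d) * p.
    rewrite mulnDr mulnA (mulnC binv b) hK; ring.
  by rewrite dvdn_addl // dvdn_mull.
have : p %| b * (binv * c + d) by rewrite dvdn_mull.
have -> : b * (binv * c + d) = (c + b * d) + (K * c) * p.
  rewrite mulnDr mulnA hK; ring.
by rewrite dvdn_addl // dvdn_mull.
Qed.

Lemma dvd_small' x : p %| x -> 0 < x -> x < 2 * p -> x = p.
Proof. move=> /dvdnP [k ->]; case: k => [|[|k]] //=; lia. Qed.

Lemma Lleft (g : nat * nat) s : g \in l -> g.1 <= s -> binv * s <= p -> binv * g.1 < p -> binv * g.1 + g.2 = p.
Proof.
move=> /gen_props [h1 h2 h3 h4 _] hs hbs hg.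
rewrite inv_equiv' in h1.
apply: dvd_small' h1 _ _.
  have : g.1 <= binv * g.1 by rewrite leq_pmull //; lia.
  lia.
lia.
Qed.

Lemma Lright (g : nat * nat) : g \in l -> b * g.2 < p -> g.1 + b * g.2 = p.
Proof.
move=> /gen_props [h1 h2 h3 h4 _] hg.
apply: dvd_small' h1 _ _.
  have : g.2 <= b * g.2 by rewrite leq_pmull //.
  lia.
lia.
Qed.

End M.


Theorem theorem6p2 (p b binv : nat) :
  prime p ->
  0 < binv < p -> b * binv = 1 %[mod p] ->
  0 < b -> b <= binv ->
  (has_two_slopes p b <->
     (p %% b = p %/ binv /\ p %/ b = p %% binv)).
Proof.
move=> pp hbinv hbb hb hbi.
have p1 := prime_gt1 pp.
have [K hK] : exists K, b * binv = 1 + K * p.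
  exists (b * binv %/ p).
  rewrite {1}(divn_eq (b * binv) p) hbb modn_small //; lia.
have mgl := mingen_lin pp hbinv hbb hb hbi.
have mgl' := mingen_lin' pp hbinv hbb hb hbi.
have LL := Lleft p1 hbinv hK hb hbi.
have LR := Lright p1 hbinv hK hb hbi.
have bp : b < p by lia.
have mP0 : (0, p) \in inv_list p b.
  by rewrite mem_inv mgl' /= ?leqnn //; rewrite muln0.
have mP1 : (1, p - binv) \in inv_list p b.
  rewrite mem_inv mgl' /=; first by rewrite leq_subr; lia.
  rewrite muln1; lia.
have mQ1 : (p - b, 1) \in inv_list p b.
  rewrite mem_inv mgl /=; first by rewrite leq_subr; lia.
  rewrite muln1; lia.
have mQ0 : (p, 0) \in inv_list p b.
  by rewrite mem_inv mgl /= ?leqnn //; rewrite muln0 addn0.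
clear hbb.
set A := slope (0, p) (1, p - binv).
set B := slope (p - b, 1) (p, 0).
have hA : A \in slopes (inv_list p b).
  apply: consec => //= z _; lia.
have hB : B \in slopes (inv_list p b).
  apply: consec => //=; first lia.
  move=> z hz; apply/negP => /andP [h1 h2].
  have := anti2 mQ1 hz h1; rewrite /= ltnS leqn0 => /eqP z2.
  have [hz1 _ _ _ _] := gen_props hz.
  move: hz1; rewrite z2 muln0 addn0 => /(dvdn_leq (leq_ltn_trans (leq0n _) h1)); by rewrite leqNgt h2.
have Achar : forall x y : nat * nat, x.1 < y.1 ->
    (slope x y = A <-> (y.2%:Z - x.2%:Z = - (binv%:Z * (y.1%:Z - x.1%:Z)))%R).
  move=> x y hxy; rewrite /A (slopeE hxy (isT : (0,p).1 < (1, p - binv).1)) /=.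
  have -> : ((p - binv)%N%:Z - p%:Z = - binv%:Z)%R by lia.
  have -> : (1%:Z - 0%:Z = 1)%R by [].
  by rewrite mulr1 mulNr.
have Bchar : forall x y : nat * nat, x.1 < y.1 ->
    (slope x y = B <-> ((y.2%:Z - x.2%:Z) * b%:Z = - (y.1%:Z - x.1%:Z))%R).
  move=> x y hxy.
  have lt : (p - b, 1).1 < (p, 0).1 by rewrite /=; lia.
  rewrite /B (slopeE hxy lt) /=.
  have -> : (p%:Z - (p - b)%N%:Z = b%:Z)%R by lia.
  have -> : (0%:Z - 1%:Z = - 1)%R by [].
  by rewrite mulN1r.
have AB : 1 < b -> A != B.
move=> b2.
  have lt : (p - b, 1).1 < (p, 0).1 by rewrite /=; clear -bp hb; lia.
  apply/negP => /eqP e; have := (Achar _ _ lt).1 (esym e); rewrite /=.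
  have -> : (p%:Z - (p - b)%N%:Z = b%:Z)%R by clear -bp; lia.
  move=> e2; have : (b * binv = 1)%N by clear -e2; nia.
  by clear -b2 hbi; nia.
split; last first.
  move=> [e1 e2].
  have ds := divn_eq p binv.
  have db := divn_eq p b.
  have tl : p %% binv < binv by rewrite ltn_pmod //; clear -hbinv; lia.
  have rl : p %% b < b by rewrite ltn_pmod.
  have s1 : 0 < p %/ binv by rewrite divn_gt0; clear -hbinv; lia.
  have t1 : 0 < p %/ b by rewrite divn_gt0 //; clear -bp; lia.
  rewrite e1 e2 in db rl t1.
  move: (p %/ binv) (p %% binv) ds tl s1 db rl t1 => s t ds tl s1 db rl t1.
  clear e1 e2.
  have b2 : 1 < b.
    rewrite ltn_neqAle hb andbT eq_sym; apply/negP => /eqP b1.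
    by rewrite b1 in rl; clear -rl s1; lia.
  have mR : (s, t) \in inv_list p b.
    rewrite mem_inv mgl /=; first by apply/andP; split; clear -db ds; nia.
    by clear -db; lia.
  have allAB : forall sl, sl \in slopes (inv_list p b) -> sl = A \/ sl = B.
    move=> sl /slopes_inv [x [y [hx hy hxy hz ->]]].
    case: (leqP y.1 s) => hys.
      left; apply/Achar => //.
      have xs : x.1 <= s by apply: ltnW (leq_trans hxy hys).
      have bxs : binv * x.1 <= binv * s by rewrite leq_mul2l xs orbT.
      have bys : binv * y.1 <= binv * s by rewrite leq_mul2l hys orbT.
      have bs : binv * s <= p by clear -ds; lia.
      have bs' : binv * s < p by clear -ds t1; lia.
      have ex := LL x s hx xs bs (leq_ltn_trans bxs bs').
      have ey := LL y s hy hys bs (leq_ltn_trans bys bs').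
      by clear -ex ey; lia.
    case: (leqP s x.1) => hxs; last first.
      by have := hz _ mR; rewrite /= hxs hys.
    right; apply/Bchar => //.
    have hxt : x.2 <= t.
      case: (ltngtP s x.1) hxs => // h _.
        by apply: ltnW; apply: (anti2 mR hx h).
      by rewrite -(samec mR hx h).
    have hyt := anti2 hx hy hxy.
    have yt : y.2 <= t by apply: ltnW (leq_trans hyt hxt).
    have bxt : b * x.2 <= b * t by rewrite leq_mul2l hxt orbT.
    have byt : b * y.2 <= b * t by rewrite leq_mul2l yt orbT.
    have bt : b * t < p by clear -db s1; lia.
    have ex := LR x hx (leq_ltn_trans bxt bt).
    have ey := LR y hy (leq_ltn_trans byt bt).
    by clear -ex ey; lia.
  rewrite /has_two_slopes; apply/eqP; apply: (@size_two _ _ A B).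
  - exact: undup_uniq.
  - by rewrite mem_undup hA.
  - by rewrite mem_undup hB.
  - exact: AB b2.
  - by move=> z; rewrite mem_undup; apply: allAB.
move=> h2.
case: (eqVneq b 1) => [b1|b1].
  exfalso.
  have L1 : forall g : nat * nat, g \in inv_list p b -> g.1 + g.2 = p.
    move=> g hg; have [h1 h1' h3 h4 _] := gen_props hg.
    rewrite b1 mul1n in h1.
    have lt2 : g.1 + g.2 < 2 * p.
      rewrite ltnNge; apply/negP => h.
      have g1 : p <= g.1 by clear -h h4; lia.
      have e := antichain mQ0 hg g1 (leq0n _).
      by rewrite -e /= in h1'; clear -h h4 e p1; rewrite -e /= in h; lia.
    move/dvdnP: h1 => [k hk].
    case: k hk => [|[|k]] hk; clear -hk h1' lt2 p1; nia.
  have allB : forall sl, sl \in slopes (inv_list p b) -> sl = B.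
    move=> sl /slopes_inv [x [y [hx hy hxy _ ->]]].
    apply/Bchar => //.
    have ex := L1 x hx; have ey := L1 y hy; rewrite b1.
    clear -ex ey; lia.
  have : size (undup (slopes (inv_list p b))) <= size [:: B].
    apply: uniq_leq_size; first exact: undup_uniq.
    by move=> z; rewrite mem_undup inE => /allB ->.
  by move: h2; rewrite /has_two_slopes => /eqP ->.
have b2 : 1 < b by clear -hb b1; lia.
have allAB : forall sl, sl \in slopes (inv_list p b) -> sl = A \/ sl = B.
  move=> sl hsl; apply: (@two_elems _ (undup (slopes (inv_list p b))) A B sl).
  - by apply/eqP.
  - by rewrite mem_undup.
  - by rewrite mem_undup.
  - exact: AB b2.
  - by rewrite mem_undup.
have idx0 : nth (0,0) (inv_list p b) 0 = (0, p).
  have hi0 : index (0, p) (inv_list p b) < size (inv_list p b) by rewrite index_mem.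
  case: (posnP (index (0, p) (inv_list p b))) => [e|pos].
    by have := nth_index (0,0) mP0; rewrite e.
  by have := nth_mono pos hi0; rewrite nth_index.
have claim : forall k, k < size (inv_list p b) -> exists X Y,
    (nth (0,0) (inv_list p b) k).1 = X + b * Y /\ (nth (0,0) (inv_list p b) k).2 + binv * X + Y = p.
  elim=> [|k IH] hk.
    by exists 0, 0; rewrite idx0 /= !muln0 !addn0.
  have [X [Y [e1 e2]]] := IH (ltnW hk).
  have hs : slope (nth (0,0) (inv_list p b) k) (nth (0,0) (inv_list p b) k.+1) \in slopes (inv_list p b).
    by apply/mapP; exists k => //; rewrite mem_iota; clear -hk; lia.
  have hlt := nth_mono (ltnSn k) hk.
  have hx : nth (0,0) (inv_list p b) k \in inv_list p b by apply: mem_nth; apply: ltnW.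
  have hy : nth (0,0) (inv_list p b) k.+1 \in inv_list p b by apply: mem_nth.
  have hlt2 := anti2 hx hy hlt.
  move: (nth (0,0) (inv_list p b) k) (nth (0,0) (inv_list p b) k.+1) hs hlt hlt2 e1 e2 => x y hs hlt hlt2 e1 e2.
  case: (allAB _ hs) => [/(Achar _ _ hlt) | /(Bchar _ _ hlt)] e.
    have m : binv * x.1 <= binv * y.1 by rewrite leq_mul2l (ltnW hlt) orbT.
    exists (X + (y.1 - x.1)), Y; rewrite mulnDr mulnBr.
    by clear -e e1 e2 m hlt; lia.
  have m : b * y.2 <= b * x.2 by rewrite leq_mul2l (ltnW hlt2) orbT.
  exists X, (Y + (x.2 - y.2)); rewrite mulnDr mulnBr.
  by clear -e e1 e2 m hlt2; lia.
have hn : index (p, 0) (inv_list p b) < size (inv_list p b) by rewrite index_mem.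
have [X [Y []]] := claim _ hn.
rewrite nth_index //= add0n => eX eY.
have p0 : 0 < p by clear -p1; lia.
have kX : b = 1 + K * X.
  apply/eqP; rewrite -(eqn_pmul2r p0); apply/eqP.
  have h1 : b * (binv * X + Y) = (b * binv) * X + b * Y by ring.
  rewrite eY hK in h1; rewrite h1.
  have -> : (1 + K * p) * X + b * Y = (X + b * Y) + K * X * p by ring.
  by rewrite -eX; ring.
have kY : binv = 1 + K * Y.
  apply/eqP; rewrite -(eqn_pmul2r p0); apply/eqP.
  have h1 : binv * (X + b * Y) = binv * X + (b * binv) * Y by ring.
  rewrite -eX hK in h1; rewrite h1.
  have -> : binv * X + (1 + K * p) * Y = (binv * X + Y) + K * Y * p by ring.
  by rewrite eY; ring.
have K1 : 0 < K.
  case: K hK kX kY => // hK _ _.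
  by clear -hK b2 hbi; nia.
have Xb : X < b by clear -kX K1; nia.
have Yb : Y < binv by clear -kY K1; nia.
have r1 : p %% b = X by rewrite eX addnC mulnC modnMDl modn_small.
have r2 : p %/ b = Y by rewrite eX addnC mulnC divnMDl // divn_small // addn0.
have r3 : p %/ binv = X by rewrite -eY mulnC divnMDl ?divn_small ?addn0 //; clear -hbinv; lia.
have r4 : p %% binv = Y by rewrite -eY mulnC modnMDl modn_small.
by rewrite r1 r2 r3 r4.
Qed.
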